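(* Suppose we have $n\ge2$ agents with additive, identical, normalized valuations, and let $a\in[0,1]$. Suppose the accuracy is $\eta<1-\frac{1-a}{(2n-1)(1+a)}$, i.e., the error between the provided prediction $(p(g_t))_{t\in[T']}$ and the true values $(v(g_t))_{t\in[T]}$ is $D=1-\eta>\frac{1-a}{(2n-1)(1+a)}$. Then any algorithm that computes an exact EFX allocation on the predictions and follows it (allocating each arriving good $g_t$ to the agent that receives $g_t$ in that allocation) while ignoring the true values, is not able to compute an $a$-EFX allocation according to the true valuation, even when $T'=T$.
   Context: Online fair division with predictions and identical valuations: goods $g_1,\dots,g_T$ arrive one per time step; all agents share a true additive normalized valuation $v$ ($v(g_t)\ge0$, $\sum_{t\in[T]}v(g_t)=1$, $v(S)=\sum_{g\in S}v(g)$) and a prediction $p=(p(g_1),\dots,p(g_{T'}))$, an additive normalized valuation over $T'$ predicted goods. The error is $D=\frac12\sum_{t=1}^{\max\{T,T'\}}|p(g_t)-v(g_t)|$ (missing entries set to $0$), and the accuracy is $\eta=1-D$. For $S\ne\emptyset$ and valuation $f$, $\bar S^f=S\setminus\{g\}$ with $g\in\arg\max_{g'\in S}f(S\setminus\{g'\})$, $\bar\emptyset^f=\emptyset$. An allocation $(A_1,\dots,A_n)$ is $a$-EFX with respect to $f$ if $f(A_i)\ge a\cdot f(\bar{A_j}^f)$ for all $i,j$; exact EFX means $1$-EFX. *)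

(* Defs.v *)
From mathcomp Require Import all_boot all_order all_algebra.
Set Implicit Arguments. Unset Strict Implicit. Unset Printing Implicit Defensive.
Import Order.TTheory GRing.Theory Num.Theory.
Local Open Scope ring_scope.

Section Defs.
Variable R : realFieldType.

Definition bval (T : nat) (f : 'I_T -> R) (S : {set 'I_T}) : R :=
  \sum_(g in S) f g.

Definition normalized (T : nat) (f : 'I_T -> R) : Prop :=
  (forall t, 0 <= f t) /\ \sum_(t < T) f t = 1.

Definition bar (T : nat) (f : 'I_T -> R) (S : {set 'I_T}) : {set 'I_T} :=
  match [pick x in S] with
  | Some x => S :\ Order.arg_max x (fun g => g \in S) (fun g => bval f (S :\ g))
  | None => set0
  end.

(* error D = 1/2 sum_t |p(g_t) - v(g_t)| (here T' = T) and accuracy eta = 1 - D *)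
Definition pred_error (T : nat) (p v : 'I_T -> R) : R :=
  2^-1 * \sum_(t < T) `|p t - v t|.

Definition accuracy (T : nat) (p v : 'I_T -> R) : R := 1 - pred_error p v.

Definition bundle (n T : nat) (A : 'I_T -> 'I_n) (i : 'I_n) : {set 'I_T} :=
  [set t | A t == i].

Definition aEFX (n T : nat) (a : R) (f : 'I_T -> R) (A : 'I_T -> 'I_n) : Prop :=
  forall i j : 'I_n, a * bval f (bar f (bundle A j)) <= bval f (bundle A i).

End Defs.

(* Main.v *)
Require Import Defs.
From mathcomp Require Import all_boot all_order all_algebra.
From mathcomp Require Import zify ring lra.
Set Implicit Arguments.
Import Order.TTheory GRing.Theory Num.Theory.
Local Open Scope ring_scope.

Section H.
Variable R : realFieldType.

Lemma bar_ge (T : nat) (f : 'I_T -> R) (S : {set 'I_T}) g :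
  g \in S -> bval f (S :\ g) <= bval f (bar f S).
Proof.
move=> gS; rewrite /bar.
case: pickP => [x0 x0S|/(_ g)]; last by rewrite gS.
case: arg_maxP => //= m mS Hm.
exact: Hm.
Qed.

Lemma mem_le (T : nat) (f : 'I_T -> R) (S : {set 'I_T}) x :
  (forall t, 0 <= f t) -> x \in S -> f x <= bval f S.
Proof.
move=> f0 xS; rewrite /bval (bigD1 x) //= lerDl.
by apply: sumr_ge0 => i _.
Qed.

Lemma sum_card (n T : nat) (A : 'I_T -> 'I_n) :
  (\sum_(i < n) #|bundle A i|)%N = T.
Proof.
rewrite -[RHS]card_ord -sum1_card (partition_big A xpredT) //=.
apply: eq_bigr => i _; rewrite -sum1_card; apply: eq_bigl => t.
by rewrite /bundle inE.
Qed.

Lemma sum_ind (T : nat) (x : 'I_T) (c : R) :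
  \sum_(t < T) (if t == x then c else 0) = c.
Proof. by rewrite -big_mkcond big_pred1_eq. Qed.

Lemma sum_const (T : nat) (c : R) : \sum_(t < T) c = c *+ T.
Proof. by rewrite sumr_const card_ord. Qed.
Lemma two_le (T : nat) (f : 'I_T -> R) (S : {set 'I_T}) x y :
  (forall t, 0 <= f t) -> x \in S -> y \in S -> x != y -> f x + f y <= bval f S.
Proof.
move=> f0 xS yS xy; rewrite /bval (bigD1 x) //= lerD2l (bigD1 y) /=; last first.
  by rewrite yS eq_sym.
by rewrite lerDl; apply: sumr_ge0 => i _.
Qed.

Lemma disj_le (n T : nat) (A : 'I_T -> 'I_n) (f : 'I_T -> R) i k :
  (forall t, 0 <= f t) -> i != k ->
  bval f (bundle A i) + bval f (bundle A k) <= \sum_(t < T) f t.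
Proof.
move=> f0 ik; rewrite /bval !(big_mkcond (fun t => t \in _)) -big_split /=.
apply: ler_sum => t _; rewrite /bundle !inE.
case: (A t =P i) => [Hi|_]; case: (A t =P k) => [Hk|_].
- by move: ik; rewrite -Hi -Hk eqxx.
- by rewrite addr0.
- by rewrite add0r.
- by rewrite addr0.
Qed.

Lemma not_all_small (n T : nat) (A : 'I_T -> 'I_n) :
  (n < T)%N -> exists j, (1 < #|bundle A j|)%N.
Proof.
move=> nT; case: (pickP (fun j => 1 < #|bundle A j|)%N) => [j Hj|H]; first by exists j.
have : (T <= n)%N.
  rewrite -(@sum_card _ _ A) -[X in (_ <= X)%N]card_ord -sum1_card.
  by apply: leq_sum => i _; move: (H i) => /= /negbT; rewrite -leqNgt.
by rewrite leqNgt nT.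
Qed.

Lemma not_all_big (n T : nat) (A : 'I_T -> 'I_n) :
  (T < n.*2)%N -> exists i, (#|bundle A i| <= 1)%N.
Proof.
move=> nT; case: (pickP (fun j => #|bundle A j| <= 1)%N) => [j Hj|H]; first by exists j.
have : (n.*2 <= T)%N.
  rewrite -(@sum_card _ _ A) -muln2 -[X in (X * _)%N]card_ord -sum_nat_const.
  by apply: leq_sum => i _; move: (H i) => /= /negbT; rewrite -ltnNge.
by rewrite leqNgt nT.
Qed.

End H.

Lemma small_case (R : realFieldType) (n : nat) (a D : R)
  (ALG : forall T : nat, ('I_T -> R) -> ('I_T -> 'I_n)) :
  (2 <= n)%N -> 0 < a -> a <= 1 -> 0 <= D -> D <= 2^-1 ->
  (1 - a) / ((2 * n - 1)%:R * (1 + a)) < D ->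
  exists (T : nat) (v p : 'I_T -> R),
    [/\ normalized v, normalized p, pred_error p v = D
      & ~ aEFX a v (ALG T p)].
Proof.
move=> n2 a0 a1 D0 Dh Dc.
set T := (2 * n - 1)%N.
have T3 : (3 <= T)%N by rewrite /T; lia.
have T3R : 3 <= T%:R :> R by rewrite (ler_nat R 3 T).
have TR0 : 0 < T%:R :> R by apply: lt_le_trans T3R.
set B : R := (T%:R)^-1.
have B0 : 0 < B by rewrite invr_gt0.
have BT : B * T%:R = 1 by rewrite mulVf // gt_eqF.
have B3 : 3 * B <= 1.
  by rewrite -[X in _ <= X]BT [B * _]mulrC (ler_pM2r B0).
have hc : B * (1 - a) < D * (1 + a).
  move: Dc; rewrite ltr_pdivrMr; last by apply: mulr_gt0 => //; lra.
  rewrite -(ltr_pM2l B0) => h; apply: (lt_le_trans h).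
  have E : B * (D * ((2*n-1)%:R * (1 + a))) = (B * T%:R) * (D * (1 + a)).
    by rewrite /T; ring.
  by rewrite E BT mul1r.
set p : 'I_T -> R := fun _ => B.
have np : normalized p.
  split => [t|]; first exact: ltW.
  by rewrite sum_const -mulr_natr.
set A := ALG T p.
have [j Hj] := @not_all_small _ _ A (ltac:(rewrite /T; lia)).
have [i Hi] := @not_all_big _ _ A (ltac:(rewrite /T; lia)).
have ij : i != j by apply/eqP => eij; move: Hi; rewrite eij leqNgt Hj.
case/card_gt1P: Hj => x [y [xj yj xy]].
have [z [zx Hz]] : exists z, z != x /\ forall f : 'I_T -> R,
    (forall t, 0 <= f t) -> bval f (bundle A i) <= f z.
  move: Hi; rewrite leq_eqVlt ltnS leqn0 => /orP [/cards1P [z0 Hz0] | /eqP /cards0_eq H0].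
  - exists z0; split.
      apply/eqP => ez; move: xj; rewrite -ez /bundle inE => /eqP Ej.
      have : z0 \in bundle A i by rewrite Hz0 set11.
      by rewrite /bundle inE Ej eq_sym (negbTE ij).
    by move=> f f0; rewrite Hz0 /bval big_set1.
  - exists y; split; first by rewrite eq_sym.
    by move=> f f0; rewrite H0 /bval big_set0.
set m := Num.min D B.
have m0 : 0 <= m by rewrite /m le_min D0 ltW.
have mD : m <= D by rewrite /m ge_min lexx.
have T2 : 0 < T%:R - 2 :> R.
  by rewrite subr_gt0; apply: lt_le_trans T3R; rewrite ltr_nat.
set e := (D - m) / (T%:R - 2).
have eT : e * (T%:R - 2) = D - m by rewrite /e divfK // gt_eqF.
have e0 : 0 <= e by rewrite /e divr_ge0 ?subr_ge0 // ?ltW //; lra.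
have eB : e <= B.
  rewrite /e ler_pdivrMr //.
  have -> : B * (T%:R - 2) = 1 - 2 * B by rewrite mulrBr BT; ring.
  rewrite /m; case: (leP D B) => DB.
    lra.
  lra.
set v : 'I_T -> R := fun t => if t == x then B + D else if t == z then B - m else B - e.
have vE : forall t, v t = (B - e) + (if t == x then D + e else 0) + (if t == z then e - m else 0).
  move=> t; rewrite /v; have [->|nx] := eqVneq t x.
    by rewrite eq_sym (negbTE zx) addr0; ring.
  have [_|nz] := eqVneq t z.
    by ring.
  by rewrite !addr0.
have pvE : forall t, `|p t - v t| = e + (if t == x then D - e else 0) + (if t == z then m - e else 0).
  move=> t; rewrite /v /p; have [->|nx] := eqVneq t x.
    rewrite eq_sym (negbTE zx) (_ : B - (B + D) = - D); last by ring.
    by rewrite normrN ger0_norm //; ring.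
  have [_|nz] := eqVneq t z.
    rewrite (_ : B - (B - m) = m); last by ring.
    by rewrite ger0_norm //; ring.
  rewrite (_ : B - (B - e) = e); last by ring.
  by rewrite ger0_norm //; ring.
exists T, v, p; split.
- split => [t|].
    rewrite /v; case: ifP => _; first by rewrite addr_ge0 // ltW.
    case: ifP => _; first by rewrite subr_ge0 /m ge_min lexx orbT.
    by rewrite subr_ge0.
  under eq_bigr do rewrite vE.
  rewrite !big_split /= !sum_const !sum_ind -[B *+ _]mulr_natr -[(- e) *+ _]mulr_natr mulNr BT.
  have -> : e * T%:R = D - m + 2 * e by rewrite -eT; ring.
  ring.
- exact np.
- rewrite /pred_error; under eq_bigr do rewrite pvE.
  rewrite !big_split /= !sum_const !sum_ind -[e *+ _]mulr_natr.
  have -> : e * T%:R = D - m + 2 * e by rewrite -eT; ring.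
  have -> : D - m + 2 * e + (D - e) + (m - e) = 2 * D by ring.
  by rewrite mulrA mulVf ?mul1r // pnatr_eq0.
- move=> /(_ i j) H.
  have v0 : forall t, 0 <= v t.
    move=> t; rewrite /v; case: ifP => _; first by rewrite addr_ge0 // ltW.
    case: ifP => _; first by rewrite subr_ge0 /m ge_min lexx orbT.
    by rewrite subr_ge0.
  have h1 : B + D <= bval v (bar v (bundle A j)).
    apply: (le_trans _ (@bar_ge R _ v _ _ yj)).
    have -> : B + D = v x by rewrite /v eqxx.
    by apply: mem_le => //; rewrite !inE xy /=; move: xj; rewrite /bundle inE.
  have h2 : bval v (bundle A i) <= B - m.
    by apply: le_trans (Hz _ v0) _; rewrite /v (negbTE zx) eqxx.
  have h3 : a * (B + D) <= B - m.
    by apply: le_trans h2; apply: le_trans H; rewrite ler_pM2l.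
  move: h3; rewrite /m; case: (leP D B) => DB.
    move=> h3; lra.
  rewrite subrr => h3.
  have : 0 < a * (B + D) by rewrite mulr_gt0 // ltr_wpDr.
  lra.
Qed.

Lemma large_case (R : realFieldType) (n : nat) (a D : R)
  (ALG : forall T : nat, ('I_T -> R) -> ('I_T -> 'I_n)) :
  (2 <= n)%N -> 0 < a -> 2^-1 < D -> D <= 1 ->
  (forall (T : nat) (p : 'I_T -> R), normalized p -> aEFX 1 p (ALG T p)) ->
  exists (T : nat) (v p : 'I_T -> R),
    [/\ normalized v, normalized p, pred_error p v = D
      & ~ aEFX a v (ALG T p)].
Proof.
move=> n2 a0 Dh D1 HEF.
set T := n.+1.
have nR : 0 < n%:R :> R by rewrite ltr0n; lia.
set q : R := (1 - D) / n%:R.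
have qn : q * n%:R = 1 - D by rewrite /q divfK // gt_eqF.
have q0 : 0 <= q by rewrite /q divr_ge0 ?subr_ge0 // ltW.
set o : 'I_T := ord0.
set p : 'I_T -> R := fun t => if t == o then D else q.
have D0 : 0 <= D by apply: le_trans (ltW Dh); rewrite invr_ge0 ler0n.
have pE : forall t, p t = q + (if t == o then D - q else 0).
  by move=> t; rewrite /p; case: ifP => _; [ring | rewrite addr0].
have np : normalized p.
  split => [t|].
    by rewrite /p; case: ifP.
  under eq_bigr do rewrite pE.
  rewrite big_split /= sum_const sum_ind mulrSr -[q *+ _]mulr_natr qn; ring.
set A := ALG T p.
have HE := HEF T p np.
set k0 := A o.
have [i ik] : exists i : 'I_n, i != k0.
  have n0 : (0 < n)%N by lia.
  have n1 : (1 < n)%N by lia.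
  have d01 : Ordinal n0 != Ordinal n1 by apply/eqP => /(congr1 val).
  case: (eqVneq k0 (Ordinal n0)) => h.
    by exists (Ordinal n1); rewrite h eq_sym.
  by exists (Ordinal n0); rewrite eq_sym.
have only0 : forall y, A y = k0 -> y = o.
  move=> y Ay; apply/eqP; apply/negPn/negP => yo.
  have H := HE i k0; rewrite mul1r in H.
  have yk : y \in bundle A k0 by rewrite /bundle inE Ay.
  have ok : o \in bundle A k0 by rewrite /bundle inE.
  have h1 : D <= bval p (bar p (bundle A k0)).
    apply: (le_trans _ (@bar_ge R _ p _ _ yk)).
    have -> : D = p o by rewrite /p eqxx.
    apply: mem_le; first by move=> t; rewrite /p; case: ifP.
    by rewrite in_setD1 ok andbT eq_sym.
  have h2 := @disj_le R _ _ A p i k0 (proj1 np) ik.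
  rewrite (proj2 np) in h2.
  have h3 := @two_le R _ p _ o y (proj1 np) ok yk (ltac:(by rewrite eq_sym)).
  rewrite /p eqxx (negbTE yo) in h3.
  lra.
have Hk : bundle A k0 = [set o].
  apply/setP => t; rewrite /bundle !inE; apply/eqP/eqP => [/only0 // | ->] //.
have card1 : #|bundle A k0| = 1%N by rewrite Hk cards1.
have [j Hj] := @not_all_small _ _ A (ltac:(rewrite /T; lia)).
have jk : j != k0 by apply/eqP => e; move: Hj; rewrite e card1.
case/card_gt1P: Hj => x [y [xj yj xy]].
have xo : x != o.
  apply/eqP => e; move: xj; rewrite /bundle inE e => /eqP Aj.
  by move: jk; rewrite -Aj eqxx.
set v : 'I_T -> R := fun t => if t == o then 0 else if t == x then D + q else q.
have vE : forall t, v t = q + (if t == o then - q else 0) + (if t == x then D else 0).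
  move=> t; rewrite /v; have [->|nto] := eqVneq t o.
    by rewrite eq_sym (negbTE xo); ring.
  have [_|ntx] := eqVneq t x.
    by ring.
  by rewrite !addr0.
have pvE : forall t, `|p t - v t| = (if t == o then D else 0) + (if t == x then D else 0).
  move=> t; rewrite /v /p; have [->|nto] := eqVneq t o.
    by rewrite eq_sym (negbTE xo) subr0 addr0 ger0_norm.
  have [_|ntx] := eqVneq t x.
    rewrite (_ : q - (D + q) = - D); last by ring.
    by rewrite normrN ger0_norm // add0r.
  by rewrite subrr normr0 addr0.
have v0 : forall t, 0 <= v t.
  move=> t; rewrite /v; case: ifP => _ //; case: ifP => _ //.
  by rewrite addr_ge0.
exists T, v, p; split.
- split => [t|]; first exact: v0.
  under eq_bigr do rewrite vE.
  rewrite !big_split /= sum_const !sum_ind mulrSr -[q *+ _]mulr_natr qn; ring.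
- exact: np.
- rewrite /pred_error; under eq_bigr do rewrite pvE.
  rewrite big_split /= !sum_ind.
  by rewrite -mulr2n -[D *+ 2]mulr_natr mulrCA mulVf ?mulr1 // pnatr_eq0.
- move=> /(_ k0 j) H.
  have h1 : D + q <= bval v (bar v (bundle A j)).
    apply: (le_trans _ (@bar_ge R _ v _ _ yj)).
    have -> : D + q = v x by rewrite /v (negbTE xo) eqxx.
    by apply: mem_le => //; rewrite in_setD1 xy xj.
  have h2 : bval v (bundle A k0) = 0 by rewrite Hk /bval big_set1 /v eqxx.
  rewrite h2 in H.
  have h4 := le_trans (ler_wpM2l (ltW a0) h1) H.
  have : 0 < a * (D + q) by apply: mulr_gt0 => //; lra.
  by rewrite ltNge h4.
Qed.

Theorem proposition4p3 (R : realFieldType) (n : nat) (a eta : R)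
  (ALG : forall T : nat, ('I_T -> R) -> ('I_T -> 'I_n)) :
  (2 <= n)%N -> 0 < a -> a <= 1 ->
  0 <= eta -> eta < 1 - (1 - a) / ((2 * n - 1)%:R * (1 + a)) ->
  (forall (T : nat) (p : 'I_T -> R), normalized p -> aEFX 1 p (ALG T p)) ->
  exists (T : nat) (v p : 'I_T -> R),
    [/\ normalized v, normalized p, accuracy p v = eta
      & ~ aEFX a v (ALG T p)].
Proof.
move=> n2 a0 a1 eta0 etah HE.
have c0 : 0 <= (1 - a) / ((2 * n - 1)%:R * (1 + a)).
  rewrite divr_ge0 ?subr_ge0 // mulr_ge0 ?ler0n //; lra.
have [T [v [p [nv np pe nf]]]] : exists (T : nat) (v p : 'I_T -> R),
    [/\ normalized v, normalized p, pred_error p v = 1 - eta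
      & ~ aEFX a v (ALG T p)].
  case: (leP (1 - eta) 2^-1) => Dh.
    apply: small_case => //; lra.
  apply: large_case => //; lra.
exists T, v, p; split.
- exact: nv.
- exact: np.
- by rewrite /accuracy pe; ring.
- exact: nf.
Qed.
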